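(* Consider the algorithm SCHEMATIC-ALGO$(G,\mu^*,m^*,\Delta^*,\gamma)$ described in the context. Suppose we are at the start of round $k$ for some $k\ge1$; let $H_k$ denote the current set $H$, and let $U_k$ be the set of edges in $E\setminus H_k$ that are underfull w.r.t. $H_k$. If $|U_k|\ge\mu^*\cdot(\Delta^* )^\gamma$, then with high probability the algorithm does not terminate at the end of round $k$ (i.e. it proceeds to round $k+1$).
   Context: Let $G=(V,E)$ be a graph with $n$ vertices, $m$ edges, average degree $d$; $\mu(G)$ is its maximum matching size. Fix a small constant $\epsilon\in(0,1)$ and $\beta:=1/\Theta(\epsilon^3)$. For $H\subseteq E$ and a pair $e=(u,v)$, $\deg_e(H):=\deg_u(H)+\deg_v(H)$. An edge $e$ is underfull w.r.t. $H$ if $\deg_e(H)<(1-\epsilon)\beta$ and overfull w.r.t. $H$ if $\deg_e(H)>\beta$. The parameters satisfy $\mu(G)/(2+\epsilon)\le\mu^*\le n$, $d\le\Delta^*\le n$, $m^*\ge m$, $0<\gamma<1$. SCHEMATIC-ALGO: set $H\leftarrow\emptyset$. Repeat rounds: in each round set Status $\leftarrow$ false; for $i=1,\dots,(100m^*\log n)/(\mu^*(\Delta^* )^\gamma)$, sample an edge $e\in E$ uniformly at random (independently, with repetition); if $e\in E\setminus H$ and $e$ is underfull w.r.t. $H$, then set Status $\leftarrow$ true, $H\leftarrow H\cup\{e\}$, and then while some edge of $H$ is overfull w.r.t. $H$, remove such an edge from $H$. If at the end of a round Status is false, stop the rounds (this is the last round). Then let $U$ be the set of edges of $E\setminus H$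 underfull w.r.t. $H$, take any $V_{small}\subseteq V$ with $\{v:\deg_v(U)\le (1-\epsilon)(\Delta^* )^\gamma/\epsilon\}\subseteq V_{small}\subseteq\{v:\deg_v(U)\le(1+\epsilon)(\Delta^* )^\gamma/\epsilon\}$, let $E_{small}:=\{(u,v)\in H\cup U: u,v\in V_{small}\}$, and return $\mu(E_{small})$. ''With high probability'' means with probability at least $1-1/\mathrm{poly}(n)$. *)

(* Defs.v *)
From HB Require Import structures.
From mathcomp Require Import all_boot all_order all_algebra.
From mathcomp Require Import all_classical all_reals all_analysis.
Set Implicit Arguments. Unset Strict Implicit. Unset Printing Implicit Defensive.
Import Order.TTheory GRing.Theory Num.Theory.
Local Open Scope ring_scope.

Section Defs.
Variable V : finType.
Definition simple_graph (E : {set {set V}}) : bool := [forall e in E, #|e| == 2]%N.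

Definition is_matching (E M : {set {set V}}) : bool :=
  (M \subset E) && [forall e1 in M, forall e2 in M, (e1 != e2) ==> [disjoint e1 & e2]].
Definition mu (E : {set {set V}}) : nat :=
  \max_(M : {set {set V}} | is_matching E M) #|M|.

Definition degv (H : {set {set V}}) (v : V) : nat := #|[set e in H | v \in e]|.
Definition dege (H : {set {set V}}) (e : {set V}) : nat := (\sum_(v in e) degv H v)%N.

Variable R : realType.
Definition underfull (eps beta : R) (H : {set {set V}}) (e : {set V}) : bool :=
  (dege H e)%:R < (1 - eps) * beta.
Definition overfull (beta : R) (H : {set {set V}}) (e : {set V}) : bool :=
  beta < (dege H e)%:R.

Definition underfull_set (eps beta : R) (E H : {set {set V}}) : {set {set V}} :=
  [set e in E | (e \notin H) && underfull eps beta H e].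

(* "while some edge of H is overfull, remove such an edge"; the edge removed is
   chosen by an arbitrary selection function [sel].  Each effective iteration
   removes an element, so #|{set V}|.+1 iterations suffice to reach the fixpoint. *)
Definition cleanup (beta : R) (sel : {set {set V}} -> {set V}) (H : {set {set V}}) :=
  iter #|{set V}|.+1
    (fun K : {set {set V}} => if [exists f in K, overfull beta K f] then K :\ sel K else K) H.

(* processing one sampled edge; state = (H, Status) *)
Definition step (eps beta : R) (sel : {set {set V}} -> {set V})
    (st : {set {set V}} * bool) (e : {set V}) : {set {set V}} * bool :=
  if (e \notin st.1) && underfull eps beta st.1 e
  then (cleanup beta sel (e |: st.1), true) else st.

Definition run_round (eps beta : R) (sel : {set {set V}} -> {set V})
    (H0 : {set {set V}}) (s : seq {set V}) : {set {set V}} * bool :=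
  foldl (step eps beta sel) (H0, false) s.

Definition num_samples (n : nat) (mstar mustar Dstar gamma : R) : nat :=
  Num.truncn ((100 * mstar * ln (n%:R)) / (mustar * powR Dstar gamma)).

(* probability (over N i.i.d. uniform samples from E) that the round ends with
   Status = false, i.e. that the algorithm terminates at the end of the round *)
Definition prob_terminate (eps beta : R) (sel : {set {set V}} -> {set V})
    (E H0 : {set {set V}}) (N : nat) : R :=
  (#|[set t : N.-tuple {set V} | all (mem E) t & ~~ (run_round eps beta sel H0 t).2]|%:R)
  / ((#|E| ^ N)%N)%:R.
End Defs.

(* Main.v *)
Require Import Defs.
From HB Require Import structures.
From mathcomp Require Import all_boot all_order all_algebra.
From mathcomp Require Import all_classical all_reals all_analysis.
From mathcomp Require Import ring lra.
Import Order.TTheory GRing.Theory Num.Theory.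
Local Open Scope ring_scope.

Lemma card_tuples_on (T : finType) (A : {set T}) N (P : pred (N.-tuple T)) :
  (forall t, P t -> all (mem A) t) -> (#|[set t : N.-tuple T | P t]| <= #|A| ^ N)%N.
Proof.
move=> HP.
pose f := fun t : N.-tuple T => ([ffun i => tnth t i] : {ffun 'I_N -> T}).
have inj_f : injective f.
  move=> t1 t2 /ffunP H; apply: eq_from_tnth => i; have := H i; by rewrite !ffunE.
rewrite -(card_imset _ inj_f) -[X in (_ <= _ ^ X)%N](card_ord N) -card_ffun_on.
apply: subset_leq_card. apply/fintype.subsetP => g /imsetP [t]; rewrite inE => /HP Ht ->.
apply/ffun_onP => i; rewrite ffunE.
by move/all_tnthP: Ht => /(_ i).
Qed.

Section Run.
Variables (V : finType) (R : realType) (eps beta : R) (sel : {set {set V}} -> {set V}).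

Lemma foldl_step_true (st : ({set {set V}} * bool)%type) (s : seq {set V}) : st.2 -> (foldl (step eps beta sel) st s).2.
Proof.
elim: s st => [|e s IH] st //= Hst; apply: IH.
unfold step; by case: ifP.
Qed.

Lemma run_round_false (H : {set {set V}}) (s : seq {set V}) : ~~ (run_round eps beta sel H s).2 ->
  all (fun e => ~~ ((e \notin H) && underfull eps beta H e)) s.
Proof.
rewrite /run_round; elim: s => [|e s IH] //= Hf.
move: Hf; rewrite [step _ _ _ (H, false) e]/step /=; case: ifP => Hc.
  by rewrite foldl_step_true.
by move=> /IH ->.
Qed.
End Run.

Theorem lemma3p2 :
  exists c : nat, (0 < c)%N /\
  forall (R : realType) (V : finType) (E : {set {set V}})
         (eps beta mustar mstar Dstar gamma : R)
         (sel : {set {set V}} -> {set V}) (Hk : {set {set V}}),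
    simple_graph E -> (0 < #|E|)%N ->
    0 < eps < 1 -> 0 < beta ->
    (mu E)%:R / (2 + eps) <= mustar -> mustar <= #|V|%:R ->
    (2 * #|E|)%:R / #|V|%:R <= Dstar -> Dstar <= #|V|%:R ->
    #|E|%:R <= mstar -> 0 < gamma < 1 ->
    (forall H : {set {set V}}, [exists f in H, overfull beta H f] ->
        sel H \in H /\ overfull beta H (sel H)) ->
    Hk \subset E ->
    mustar * powR Dstar gamma <= #|underfull_set eps beta E Hk|%:R ->
    prob_terminate eps beta sel E Hk
      (num_samples #|V| mstar mustar Dstar gamma) <= (#|V|%:R ^+ c)^-1.
Proof.
exists 1%N; split => //.
move=> R V E eps beta mustar mstar Dstar gamma sel Hk sg E0 /andP[e0 e1] b0
  hmu hmuV hD hDV hm /andP[g0 g1] hsel HkE hU.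
set U := underfull_set eps beta E Hk.
set N := num_samples _ _ _ _ _.
have UE : U \subset E by apply/fintype.subsetP => x; rewrite inE => /andP[].
have [e eE] : exists e, e \in E.
  by move: E0; rewrite card_gt0 => /set0Pn.
have n2 : (2 <= #|V|)%N.
  move/forallP: sg => /(_ e); rewrite eE /= => /eqP <-; exact: max_card.
have mu1 : (1 <= mu E)%N.
  rewrite /mu; apply: (@leq_trans #|[set e]|); first by rewrite cards1.
  apply: (@leq_bigmax_cond _ (is_matching E) (fun M : {set {set V}} => #|M|) [set e]).
  rewrite /is_matching; apply/andP; split.
    by apply/fintype.subsetP => x; rewrite inE => /eqP ->.
  apply/forallP => x; apply/implyP; rewrite inE => /eqP ->.
  apply/forallP => y; apply/implyP; rewrite inE => /eqP ->.
  by rewrite eqxx.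
have mus0 : 0 < mustar.
  apply: lt_le_trans hmu; apply: divr_gt0; last lra.
  by rewrite ltr0n.
set n : R := #|V|%:R.
have n2r : 2 <= n by rewrite /n ler_nat.
have D0 : 0 < Dstar.
  apply: lt_le_trans hD; apply: divr_gt0; last lra.
  by rewrite ltr0n muln_gt0.
set P := mustar * powR Dstar gamma.
have P0 : 0 < P by rewrite /P mulr_gt0 // powR_gt0.
set a : R := #|E|%:R.
set u : R := #|U|%:R.
have ua : u <= a by rewrite /u /a ler_nat subset_leq_card.
have a0 : 0 < a by rewrite /a ltr0n.
have Pu : P <= u by [].
have am : a <= mstar by [].
have step1 : prob_terminate eps beta sel E Hk N <= (1 - u / a) ^+ N.
  rewrite /prob_terminate.
  have -> : 1 - u / a = (#|E :\: U|%:R) / a.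
    rewrite cardsD (finset.setIidPr UE) natrB; last exact: subset_leq_card.
    rewrite -/a -/u; field; lra.
  rewrite expr_div_n -!natrX.
  apply: ler_wpM2r; first by rewrite invr_ge0 ler0n.
  rewrite ler_nat; apply: card_tuples_on => t /andP[h1 h2].
  have h3 := @run_round_false _ _ _ _ _ _ _ h2.
  apply/allP => x xt; have := allP h1 x xt; have := allP h3 x xt.
  rewrite /= !inE => hx ->; rewrite andbT; apply: contra hx => /andP[_ ->] //.
apply: (le_trans step1); clear step1 hsel.
have p0 : 0 < u / a by apply: divr_gt0 => //; lra.
have p1 : u / a <= 1 by rewrite ler_pdivrMr // mul1r.
have m0 : 0 < mstar by lra.
set p := u / a.
set q := P / mstar.
have qp : q <= p.
  rewrite /q /p ler_pdivrMr // mulrAC ler_pdivlMr //.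
  apply: ler_pM => //; lra.
have q0 : 0 < q by apply: divr_gt0.
have q1 : q <= 1 by rewrite /q ler_pdivrMr // mul1r; lra.
have lnn : 1 / 2 <= ln n.
  have h := expR_ge1Dx (- ln n).
  rewrite expRN lnK in h; last by rewrite posrE; lra.
  have : n^-1 <= 1/2 by rewrite -div1r ler_pdivrMr; lra.
  lra.
set x := 100 * mstar * ln n / P.
have xq : x * q = 100 * ln n.
  by rewrite /x /q; field; rewrite (gt_eqF m0) (gt_eqF P0).
have Nx : x < N.+1%:R by apply: truncnS_gt.
have Np : ln n <= N%:R * p.
  have : N%:R * q <= N%:R * p by apply: ler_wpM2l.
  have : (x - 1) * q <= N%:R * q.
    apply: ler_wpM2r; first lra.
    move: Nx; rewrite -natr1; lra.
  have : (x - 1) * q = 100 * ln n - q by rewrite mulrBl xq mul1r.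
  lra.
have -> : (n ^+ 1)^-1 = expR (- ln n) by rewrite expr1 expRN lnK // posrE; lra.
apply: (@le_trans _ _ (expR (- p) ^+ N)).
  have h1 : 0 <= 1 - p by rewrite subr_ge0.
  have h2 := expR_ge1Dx (- p).
  apply: lerXn2r; rewrite ?nnegrE ?expR_ge0 //; lra.
rewrite -expRM_natl ler_expR; lra.
Qed.
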